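(* If the standing assumptions (listed in the context) hold, then Algorithm SLBFGS is well-defined and the sequence $(\mathcal{J}(x_k))$ is strictly monotonically decreasing and convergent.
   Context: Let $\mathcal{X}$ be a Hilbert space and $\mathcal{J}:\mathcal{X}\to\mathbb{R}$. Algorithm SLBFGS (structured inverse L-BFGS): inputs $x_0\in\mathcal{X}$, $\epsilon\geq0$, $\ell\in\mathbb{N}_0$, $c_0\geq 0$, $C_0\in[c_0,\infty]$, $c_s,c_1,c_2>0$; let $\tau_0>0$. For $k=0,1,2,\ldots$: let $m=\max\{0,k-\ell\}$; choose a symmetric positive semi-definite bounded linear operator $S_k$; set $B_k^{(0)}=\tau_k I+S_k$; let $B_k$ be obtained from $B_k^{(0)}$ and the currently stored pairs $(s_j,y_j)$, $m\le j\le k-1$, by successive L-BFGS updates $B\mapsto B+\frac{yy^T}{y^Ts}-\frac{Bss^TB}{s^TBs}$; set $d_k=-B_k^{-1}\nabla\mathcal{J}(x_k)$; compute a step length $\alpha_k>0$ by a line search; set $s_k=\alpha_kd_k$, $x_{k+1}=x_k+s_k$, $y_k=\nabla\mathcal{J}(x_{k+1})-\nabla\mathcal{J}(x_k)$; store $(s_k,y_k)$ only if $y_k^Ts_k>c_s\|s_k\|^2$; if $k\ge\ell$ remove $(s_m,y_m)$ from storage; stop with output $x_{k+1}$ if $\|\nabla\mathcal{J}(x_{k+1})\|\le\epsilon$; set $z_k=y_k-S_{k+1}s_k$, $\omega^l_{k+1}=\min\{c_0,c_1\|\nabla\mathcal{J}(x_{k+1})\|^{c_2}\}$, $\omega^u_{k+1}=\max\{C_0,(c_1\|\nabla\mathcal{J}(x_{k+1})\|^{c_2})^{-1}\}$;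 with $P(t)=\min\{\max\{t,\omega^l_{k+1}\},\omega^u_{k+1}\}$ and $\rho=z_k^Ts_k$ let $\tau^s=P(\rho/\|s_k\|^2)$, $\tau^g=P(\|z_k\|/\|s_k\|)$, $\tau^z=P(\|z_k\|^2/\rho)$; if $\rho>0$ choose $\tau_{k+1}\in[\tau^s,\tau^z]$, else choose $\tau_{k+1}\in[\tau^s,\tau^g]$. Line searches: Armijo with backtracking means, for fixed $\beta,\sigma\in(0,1)$, $\alpha_k$ is the largest number in $\{1,\beta,\beta^2,\ldots\}$ with $\mathcal{J}(x_{k+1})\le\mathcal{J}(x_k)+\alpha_k\sigma\nabla\mathcal{J}(x_k)^Td_k$; the Wolfe–Powell conditions are this Armijo inequality together with $\nabla\mathcal{J}(x_{k+1})^Td_k\ge\eta\nabla\mathcal{J}(x_k)^Td_k$ for fixed $\eta\in(\sigma,1)$. Standing assumptions: 1) $\mathcal{J}$ is continuously differentiable and bounded below; 2) the step sizes consistently satisfy the Armijo condition computed by backtracking, or consistently satisfy the Wolfe–Powell conditions; 3) $c_0=0$ is only chosen if with this choice $B_k$ is symmetric positive definite for all $k$ (e.g. if every $S_k$ is symmetric positive definite). *)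

(* Defs.v *)
From HB Require Import structures.
From mathcomp Require Import all_boot all_order all_algebra.
From mathcomp Require Import all_classical all_reals all_analysis.
Set Implicit Arguments. Unset Strict Implicit. Unset Printing Implicit Defensive.
Import Order.TTheory GRing.Theory Num.Theory.
Import numFieldNormedType.Exports.
Local Open Scope ring_scope.

Section SLBFGS.
Variables (R : realType) (X : normedModType R) (inner : X -> X -> R).

(* [inner] is an inner product on X inducing the norm of X;
   together with completeness of X this makes X a real Hilbert space. *)
Definition is_inner_product : Prop :=
  [/\ forall u v, inner u v = inner v u,
      forall a u v w, inner (a *: u + v) w = a * inner u w + inner v w
    & forall v, inner v v = `|v| ^+ 2].

Definition is_C1_with_gradient (J : X -> R) (g : X -> X) : Prop :=
  (forall x, differentiable J x /\ forall h, 'd J x h = inner (g x) h)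
  /\ continuous g.

Definition sym_psd_bounded (S : X -> X) : Prop :=
  [/\ forall a u v, S (a *: u + v) = a *: S u + S v,
      exists M : R, forall v, `|S v| <= M * `|v|,
      forall u v, inner (S u) v = inner u (S v)
    & forall v, 0 <= inner (S v) v].

Definition spd_bounded (B : X -> X) : Prop :=
  sym_psd_bounded B /\
  exists mu : R, 0 < mu /\ forall v, mu * `|v| ^+ 2 <= inner (B v) v.

(* one L-BFGS (BFGS) update  B + y y^T/(y^T s) - B s s^T B/(s^T B s) *)
Definition bfgs_update (B : X -> X) (s y : X) : X -> X :=
  fun v => B v + (inner y v / inner y s) *: y
               - (inner s (B v) / inner s (B s)) *: B s.

Fixpoint chain_ok (B : X -> X) (l : seq (X * X)) : Prop :=
  match l with
  | [::] => True
  | (s, y) :: l' => 0 < inner y s /\ 0 < inner s (B s)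
                    /\ chain_ok (bfgs_update B s y) l'
  end.

Definition apply_updates (B : X -> X) (l : seq (X * X)) : X -> X :=
  foldl (fun B p => bfgs_update B p.1 p.2) B l.

Variables (J : X -> R) (g : X -> X).

Inductive line_search :=
  | ArmijoBacktracking of R & R
  | WolfePowell of R & R.

Definition ls_params_ok (ls : line_search) : Prop :=
  match ls with
  | ArmijoBacktracking beta sigma => 0 < beta < 1 /\ 0 < sigma < 1
  | WolfePowell sigma eta => 0 < sigma /\ sigma < eta /\ eta < 1
  end.

Definition armijo (sigma : R) (x d : X) (a : R) : Prop :=
  J (x + a *: d) <= J x + a * sigma * inner (g x) d.

Definition ls_ok (ls : line_search) (x d : X) (a : R) : Prop :=
  match ls with
  | ArmijoBacktracking beta sigma =>
      exists i : nat, a = beta ^+ i /\ armijo sigma x d a /\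
        forall j : nat, (j < i)%N -> ~ armijo sigma x d (beta ^+ j)
  | WolfePowell sigma eta =>
      0 < a /\ armijo sigma x d a /\
      eta * inner (g x) d <= inner (g (x + a *: d)) d
  end.

Variables (eps : R) (ell : nat) (c0 : R) (C0 : \bar R) (cs c1 c2 : R)
          (ls : line_search).

(* safeguarding of tau_{k+1}; gnext = grad J(x_{k+1}) *)
Definition omega_l (gnext : X) : R :=
  Num.min c0 (c1 * `|gnext| `^ c2).
Definition omega_u (gnext : X) : \bar R :=
  Order.max C0 ((c1 * `|gnext| `^ c2)^-1)%:E.
Definition proj_tau (gnext : X) (t : R) : R :=
  fine (Order.min (Num.max t (omega_l gnext))%:E (omega_u gnext)).

(* admissible choices of tau_{k+1}, given s_k, y_k, S_{k+1}, grad J(x_{k+1}) *)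
Definition tau_admissible (s y : X) (Snext : X -> X) (gnext : X) (t : R)
  : Prop :=
  let z := y - Snext s in
  let rho := inner z s in
  let tau_s := proj_tau gnext (rho / `|s| ^+ 2) in
  let tau_g := proj_tau gnext (`|z| / `|s|) in
  let tau_z := proj_tau gnext (`|z| ^+ 2 / rho) in
  if 0 < rho then tau_s <= t <= tau_z else tau_s <= t <= tau_g.

Variables (x : nat -> X) (S : nat -> X -> X) (tau alpha : nat -> R)
          (d : nat -> X).

Definition s_ (k : nat) : X := x k.+1 - x k.
Definition y_ (k : nat) : X := g (x k.+1) - g (x k).

(* pairs stored at the start of iteration k, in increasing order of j:
   j in [m, k-1], m = max{0, k - ell}, with the curvature test *)
Definition stored_pairs (k : nat) : seq (X * X) :=
  let m := (k - ell)%N in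
  [seq (s_ j, y_ j) | j <- iota m (k - m) & cs * `|s_ j| ^+ 2 < inner (y_ j) (s_ j)].

Definition B0_ (k : nat) : X -> X := fun v => tau k *: v + S k v.
Definition B_ (k : nat) : X -> X := apply_updates (B0_ k) (stored_pairs k).

Definition iter_ok (k : nat) : Prop :=
  [/\ B_ k (d k) = - g (x k), ls_ok ls (x k) (d k) (alpha k)
    & x k.+1 = x k + alpha k *: d k].

(* state at the beginning of iteration N: iterations 0..N-1 were carried out,
   none of them stopped, and S_0..S_N, tau_0..tau_N were chosen as required *)
Definition run_prefix (N : nat) : Prop :=
  [/\ 0 < tau 0,
      forall k, (k <= N)%N -> sym_psd_bounded (S k)
    & forall k, (k < N)%N ->
        [/\ iter_ok k, eps < `|g (x k.+1)|
          & tau_admissible (s_ k) (y_ k) (S k.+1) (g (x k.+1)) (tau k.+1)]].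

End SLBFGS.

(* Main.v *)
Require Import Defs.
From HB Require Import structures.
From mathcomp Require Import all_boot all_order all_algebra.
From mathcomp Require Import all_classical all_reals all_analysis.
From mathcomp Require Import ring lra.
Import Order.TTheory GRing.Theory Num.Theory.
Import numFieldNormedType.Exports.
Local Open Scope ring_scope.
Set Implicit Arguments. Unset Strict Implicit. Unset Printing Implicit Defensive.

Section Inner.
Variables (R : realType) (X : normedModType R) (inner : X -> X -> R).
Hypothesis HI : is_inner_product inner.

Lemma innerC u v : inner u v = inner v u.
Proof. by case: HI. Qed.
Lemma inner_lin a u v w : inner (a *: u + v) w = a * inner u w + inner v w.
Proof. by case: HI. Qed.
Lemma inner_self v : inner v v = `|v| ^+ 2.
Proof. by case: HI. Qed.
Lemma inner0l w : inner 0 w = 0.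
Proof.
have := inner_lin 1 0 0 w; rewrite scaler0 addr0 mul1r => /eqP.
by rewrite -subr_eq subrr eq_sym => /eqP.
Qed.
Lemma innerDl u v w : inner (u + v) w = inner u w + inner v w.
Proof. by rewrite -[u in LHS]scale1r inner_lin mul1r. Qed.
Lemma innerZl a u w : inner (a *: u) w = a * inner u w.
Proof. by rewrite -[a *: u]addr0 inner_lin inner0l addr0. Qed.
Lemma innerNl u w : inner (- u) w = - inner u w.
Proof. by rewrite -scaleN1r innerZl mulN1r. Qed.
Lemma innerBl u v w : inner (u - v) w = inner u w - inner v w.
Proof. by rewrite innerDl innerNl. Qed.
Lemma inner0r w : inner w 0 = 0.
Proof. by rewrite innerC inner0l. Qed.
Lemma innerDr u v w : inner w (u + v) = inner w u + inner w v.
Proof. by rewrite innerC innerDl !(innerC w). Qed.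
Lemma innerZr a u w : inner w (a *: u) = a * inner w u.
Proof. by rewrite innerC innerZl (innerC w). Qed.
Lemma innerNr u w : inner w (- u) = - inner w u.
Proof. by rewrite innerC innerNl (innerC w). Qed.
Lemma innerBr u v w : inner w (u - v) = inner w u - inner w v.
Proof. by rewrite innerDr innerNr. Qed.

Lemma CS_sq u v : inner u v ^+ 2 <= `|u| ^+ 2 * `|v| ^+ 2.
Proof.
have := inner_self (`|v| ^+ 2 *: u - inner u v *: v).
rewrite !(innerBl, innerBr, innerZl, innerZr) (innerC v u) !inner_self => E.
have H0 : 0 <= `|v| ^+ 2 * (`|v| ^+ 2 * `|u| ^+ 2 - inner u v ^+ 2).
  have -> : `|v| ^+ 2 * (`|v| ^+ 2 * `|u| ^+ 2 - inner u v ^+ 2) = 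
     `| (`|v| ^+ 2 *: u - inner u v *: v)| ^+ 2 by rewrite -E; ring.
  exact: sqr_ge0.
have [v0|vn0] := eqVneq v 0.
  by rewrite v0 inner0r normr0; lra.
have vp : 0 < `|v| ^+ 2 by rewrite exprn_gt0 // normr_gt0.
rewrite pmulr_rge0 // in H0; lra.
Qed.

Lemma CS u v : `|inner u v| <= `|u| * `|v|.
Proof.
have := CS_sq u v; rewrite -exprMn -[inner u v ^+ 2]real_normK ?num_real //.
by rewrite ler_pXn2r // ?nnegrE ?mulr_ge0.
Qed.


Section Ops.
Variable B : X -> X.
Hypothesis BL : forall a u v, B (a *: u + v) = a *: B u + B v.
Lemma B0 : B 0 = 0.
Proof.
have := BL 1 0 0; rewrite scaler0 addr0 scale1r => /eqP.
by rewrite -subr_eq subrr eq_sym => /eqP.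
Qed.
Lemma BD u v : B (u + v) = B u + B v.
Proof. by rewrite -[u in LHS]scale1r BL scale1r. Qed.
Lemma BZ a u : B (a *: u) = a *: B u.
Proof. by rewrite -[a *: u]addr0 BL B0 addr0. Qed.
Lemma BN u : B (- u) = - B u.
Proof. by rewrite -scaleN1r BZ scaleN1r. Qed.
Lemma BB u v : B (u - v) = B u - B v.
Proof. by rewrite BD BN. Qed.
End Ops.

Lemma shuffle6 (V : zmodType) (a b c d e f : V) :
  a + b + (c + d) - (e + f) = a + c - e + (b + d - f).
Proof.
by rewrite opprD !addrA; congr (_ + _); rewrite -!addrA; congr (_ + _);
  rewrite addrC -!addrA; congr (_ + _); rewrite addrC -!addrA; congr (_ + _); rewrite addrC.
Qed.

Lemma real_aux (nv p q A C mu Q ys : R) : 0 < mu -> 0 < ys -> 0 <= p -> 0 <= q ->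
  0 <= A -> 0 <= C -> 0 <= nv -> nv <= A * p + C * q -> mu * p ^+ 2 <= Q ->
  nv ^+ 2 <= (2 * A ^+ 2 / mu + 2 * C ^+ 2 * ys) * (Q + q ^+ 2 / ys).
Proof.
move=> mu0 ys0 p0 q0 A0 C0 nv0 h1 h2.
set Qm := Q / mu; set r := q ^+ 2 / ys.
have eQ : Q = mu * Qm by rewrite /Qm mulrC divfK // gt_eqF.
have eq2 : q ^+ 2 = ys * r by rewrite /r mulrC divfK // gt_eqF.
have pQ : p ^+ 2 <= Qm by rewrite /Qm ler_pdivlMr // mulrC.
have r0 : 0 <= r by apply: divr_ge0; [exact: sqr_ge0| exact: ltW].
have Qm0 : 0 <= Qm by apply: le_trans pQ; exact: sqr_ge0.
rewrite eQ.
have e1 : 2 * A ^+ 2 / mu * (mu * Qm) = 2 * A ^+ 2 * Qm.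
  by rewrite -mulrA [mu^-1 * _]mulrA mulVf ?gt_eqF // mul1r.
have sA := sqr_ge0 A; have sC := sqr_ge0 C.
have h3 : 0 <= 2 * A ^+ 2 / mu * r.
  by apply: mulr_ge0 => //; apply: divr_ge0; [apply: mulr_ge0|apply: ltW].
have h4 : 0 <= 2 * C ^+ 2 * ys * (mu * Qm).
  apply: mulr_ge0; last by apply: mulr_ge0 => //; apply: ltW.
  by apply: mulr_ge0; [apply: mulr_ge0|apply: ltW].
have h5 : nv ^+ 2 <= 2 * A ^+ 2 * p ^+ 2 + 2 * C ^+ 2 * q ^+ 2.
  have : nv ^+ 2 <= (A * p + C * q) ^+ 2 by rewrite ler_pXn2r // ?nnegrE // addr_ge0 // mulr_ge0.
  move=> h; apply: le_trans h _; rewrite -subr_ge0.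
  have -> : 2 * A ^+ 2 * p ^+ 2 + 2 * C ^+ 2 * q ^+ 2 - (A * p + C * q) ^+ 2 = (A * p - C * q) ^+ 2 by ring.
  exact: sqr_ge0.
rewrite eq2 in h5.
have h6 : 2 * A ^+ 2 * p ^+ 2 <= 2 * A ^+ 2 * Qm by apply: ler_wpM2l => //; exact: mulr_ge0.
rewrite mulrDl !mulrDr e1.
move: h3 h4 h5 h6; rewrite !mulrA; move=> h3 h4 h5 h6; lra.
Qed.


Lemma spd_update B s y : spd_bounded inner B -> 0 < inner y s -> 0 < inner s (B s) ->
  spd_bounded inner (bfgs_update inner B s y).
Proof.
case=> [[BL [M HM] Bsym Bpsd] [mu [mu0 Bco]]] ys0 c0.
have key v : inner (bfgs_update inner B s y v) v =
    inner (B v) v + inner y v ^+ 2 / inner y s - inner s (B v) ^+ 2 / inner s (B s).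
  rewrite /bfgs_update !(innerDl, innerNl, innerZl) (Bsym s v).
  by rewrite !expr2; congr (_ + _ - _); rewrite mulrAC.
have lin a u v : bfgs_update inner B s y (a *: u + v) =
    a *: bfgs_update inner B s y u + bfgs_update inner B s y v.
  rewrite /bfgs_update BL innerDr innerZr innerDr innerZr.
  rewrite !mulrDl !scalerDl !scalerDr !scalerN !scalerA !mulrA.
  exact: shuffle6.
set ys := inner y s in ys0 key *; set c := inner s (B s) in c0 key *.
have co : exists mu', 0 < mu' /\ forall v, mu' * `|v| ^+ 2 <= inner (bfgs_update inner B s y v) v.
  set A := 1 + `|s| * `|y| / ys; set C := `|s| / ys.
  set K := 2 * A ^+ 2 / mu + 2 * C ^+ 2 * ys.
  have A1 : 1 <= A by rewrite /A lerDl divr_ge0 ?mulr_ge0 // ltW.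
  have C0 : 0 <= C by rewrite /C divr_ge0 // ltW.
  have K0 : 0 < K.
    have k1 : 0 <= 2 * C ^+ 2 * ys.
      by apply: mulr_ge0; [apply: mulr_ge0 => //; exact: sqr_ge0| exact: ltW].
    have k2 : 0 < 2 * A ^+ 2 / mu.
      by apply: divr_gt0 => //; apply: mulr_gt0 => //; apply: exprn_gt0; lra.
    rewrite /K; lra.
  exists K^-1; split; first by rewrite invr_gt0.
  move=> v; rewrite key.
  set b := inner s (B v); set t := b / c; set w := v - t *: s.
  have eQ : inner (B w) w = inner (B v) v - b ^+ 2 / c.
    rewrite /w (BB BL) (BZ BL) !(innerDl, innerNl, innerZl, innerDr, innerNr, innerZr).
    rewrite (innerC (B v) s) (Bsym s v) (innerC (B s) s) -/b -/c /t.
    field; by rewrite gt_eqF.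
  have hv : `|v| <= A * `|w| + C * `|inner y v|.
    have ev : v = w + t *: s by rewrite /w subrK.
    have et : inner y v = inner y w + t * ys by rewrite {1}ev innerDr innerZr.
    have ht : `|t| * ys <= `|inner y v| + `|y| * `|w|.
      have -> : `|t| * ys = `|inner y v - inner y w|.
      by rewrite et addrAC subrr add0r [RHS]normrM (gtr0_norm ys0).
      apply: le_trans (ler_normB _ _) _; apply: lerD => //; exact: CS.
    have h1 : `|v| <= `|w| + `|t| * `|s| by rewrite {1}ev; apply: le_trans (ler_normD _ _) _; rewrite normrZ.
    apply: le_trans h1 _.
    have -> : `|t| * `|s| = (`|t| * ys) * (`|s| / ys) by field; rewrite gt_eqF.
    have : (`|t| * ys) * (`|s| / ys) <= (`|inner y v| + `|y| * `|w|) * (`|s| / ys).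
      by apply: ler_wpM2r => //; rewrite divr_ge0 // ltW.
    move=> h2; apply: le_trans (lerD (lexx _) h2) _.
    rewrite /A /C le_eqVlt; apply/orP; left; apply/eqP; field; by rewrite gt_eqF.
  have := real_aux mu0 ys0 (normr_ge0 w) (normr_ge0 (inner y v)) (le_trans ler01 A1) C0
     (normr_ge0 v) hv (Bco w).
  rewrite -/K eQ real_normK ?num_real // => h.
  by rewrite ler_pdivrMl // addrAC.
have [mu' [mu'0 co']] := co.
split; first split.
- exact: lin.
- exists (`|M| + `|y| ^+ 2 / ys + `|M| ^+ 2 * `|s| ^+ 2 / c) => v.
  have HM' u : `|B u| <= `|M| * `|u|.
    by apply: le_trans (HM u) _; apply: ler_wpM2r => //; exact: ler_norm.
  rewrite /bfgs_update.
  apply: le_trans (ler_normB _ _) _; apply: le_trans (lerD (ler_normD _ _) (lexx _)) _.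
  rewrite !normrZ !mulrDl; apply: lerD; first apply: lerD.
  + exact: HM'.
  + rewrite normfV -/ys (gtr0_norm ys0) [leLHS]mulrAC [leRHS]mulrAC.
    apply: ler_wpM2r; first by rewrite invr_ge0 ltW.
    rewrite expr2 mulrAC; apply: ler_wpM2r => //; exact: CS.
  + rewrite normfV -/c (gtr0_norm c0) [leLHS]mulrAC [leRHS]mulrAC.
    apply: ler_wpM2r; first by rewrite invr_ge0 ltW.
    have h1 := CS s (B v); have h2 := HM' v; have h3 := HM' s.
    have n1 := normr_ge0 (inner s (B v)); have n2 := normr_ge0 (B s).
    have n3 := normr_ge0 v; have n4 := normr_ge0 s; have n5 := normr_ge0 M.
    have n6 := normr_ge0 (B v).
    apply: le_trans (ler_pM n1 n2 h1 h3) _.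
    have : `|s| * `|B v| * (`|M| * `|s|) <= `|s| * (`|M| * `|v|) * (`|M| * `|s|).
      by apply: ler_wpM2r; [exact: mulr_ge0| exact: ler_wpM2l].
    move=> h; apply: le_trans h _; rewrite !expr2 le_eqVlt; apply/orP; left; apply/eqP; ring.
- move=> u v; rewrite /bfgs_update !(innerDl, innerNl, innerZl, innerDr, innerNr, innerZr).
  rewrite (Bsym u v) (Bsym s v) (innerC u y) (innerC u (B s)) (Bsym s u); ring.
- move=> v; apply: le_trans (co' v); apply: mulr_ge0; [exact: ltW| exact: sqr_ge0].
- by exists mu'.
Qed.


Lemma spd_pos B v : spd_bounded inner B -> v != 0 -> 0 < inner (B v) v.
Proof.
case=> _ [mu [mu0 Bco]] vn0; apply: lt_le_trans (Bco v).
by rewrite mulr_gt0 // exprn_gt0 // normr_gt0.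
Qed.

Lemma chain_spd l B : spd_bounded inner B -> all (fun p => 0 < inner p.2 p.1) l ->
  chain_ok inner B l /\ spd_bounded inner (apply_updates inner B l).
Proof.
elim: l B => [|[s y] l IH] B HB /=; first by [].
move/andP=> [hys hl].
have sn0 : s != 0 by apply/eqP => s0; move: hys; rewrite s0 inner0r ltxx.
have hc : 0 < inner s (B s) by rewrite innerC; exact: spd_pos.
have HB' := spd_update HB hys hc.
have [c1 c2] := IH _ HB' hl.
by split.
Qed.

End Inner.

Lemma shZ (V : zmodType) (a b c d e : V) : a - (b - c) - (d - (e - c)) = a - d - (b - e).
Proof.
rewrite !opprB [e - c - d]addrAC [c - b]addrC -!addrA; congr (_ + _).
rewrite [c + _]addrCA [c + _]addrCA subrr addr0.
by rewrite addrC [RHS]addrCA addrA.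
Qed.

Lemma real_aux2 (R : realType) (nw nb I om mu M1 : R) : 0 < om -> mu * nw ^+ 2 <= I ->
  nb ^+ 2 <= M1 ^+ 2 * nw ^+ 2 -> om * M1 ^+ 2 = mu ->
  nw ^+ 2 - om * I - (om * I - om * (om * nb ^+ 2)) <= ((1 - om * mu / 2) * nw) ^+ 2.
Proof.
move=> om0 h1 h2 eom.
have h3 : om * (mu * nw ^+ 2) <= om * I by apply: ler_wpM2l => //; exact: ltW.
have h4 : (om * om) * nb ^+ 2 <= (om * om) * (M1 ^+ 2 * nw ^+ 2).
  by apply: ler_wpM2l => //; apply: mulr_ge0; exact: ltW.
have e : om * om * (M1 ^+ 2 * nw ^+ 2) = om * mu * nw ^+ 2 by rewrite -eom; ring.
rewrite e in h4.
rewrite -subr_ge0.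
have -> : ((1 - om * mu / 2) * nw) ^+ 2 - (nw ^+ 2 - om * I - (om * I - om * (om * nb ^+ 2))) =
  (om * I - om * (mu * nw ^+ 2)) *+ 2 + (om * mu * nw ^+ 2 - om * om * nb ^+ 2) + (om * mu * nw / 2) ^+ 2.
  by rewrite -eom; field.
rewrite addr_ge0 ?sqr_ge0 // addr_ge0 ?mulrn_wge0 // subr_ge0 //.
Qed.

Section Bij.
Variables (R : realType) (X : completeNormedModType R) (inner : X -> X -> R).
Hypothesis HI : is_inner_product inner.

Lemma spd_bij B : spd_bounded inner B -> bijective B.
Proof.
case=> [[BL [M HM] Bsym Bpsd] [mu [mu0 Bco]]].
set M1 := `|M| + mu.
have hM := normr_ge0 M.
have M10 : 0 < M1 by rewrite /M1; lra.
have muM : mu <= M1 by rewrite /M1 lerDr.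
have HM1 v : `|B v| <= M1 * `|v|.
  apply: le_trans (HM v) _; apply: ler_wpM2r => //.
  by apply: le_trans (ler_norm M) _; rewrite /M1; lra.
set om := mu / M1 ^+ 2.
have om0 : 0 < om by rewrite /om divr_gt0 // exprn_gt0.
have eom : om * M1 ^+ 2 = mu by rewrite /om divfK // gt_eqF // exprn_gt0.
have om1 : om * mu <= 1.
  rewrite /om mulrAC ler_pdivrMr ?exprn_gt0 // mul1r.
  by rewrite -expr2 ler_pXn2r // ?nnegrE ltW.
set k := 1 - om * mu / 2.
have omu := mulr_gt0 om0 mu0.
have k0 : 0 <= k by rewrite /k; lra.
have k1 : k < 1 by rewrite /k; lra.
have contr w : `|w - om *: B w| <= k * `|w|.
  have sq : `|w - om *: B w| ^+ 2 <= (k * `|w|) ^+ 2.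
    rewrite -(inner_self HI) !(innerBl HI, innerBr HI, innerZl HI, innerZr HI) !(inner_self HI) (innerC HI w (B w)).
    apply: real_aux2 om0 (Bco w) _ eom.
    by rewrite -exprMn ler_pXn2r ?nnegrE ?mulr_ge0 // ltW.
  by move: sq; rewrite ler_pXn2r // ?nnegrE ?mulr_ge0.
have surj f : exists p, B p = f.
  pose T := fun v => v - om *: (B v - f).
  have Tdiff u v : T u - T v = (u - v) - om *: B (u - v).
    rewrite /T (BB BL) scalerBr scalerBr scalerBr.
    exact: shZ.
  have ctr : is_contraction (totalfun T).
    exists (NngNum k0); split => //= -[u v] _ /=.
    by rewrite Tdiff; exact: contr.
  have [p _ hp] := @banach_fixed_point R X setT (totalfun T) ctr closedT (ex_intro _ 0 I).
  exists p; move: hp; rewrite /= /T => /eqP; rewrite -subr_eq0 opprB addrC subrK.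
  rewrite scaler_eq0 (gt_eqF om0) /= subr_eq0 => /eqP.
  by [].
have inj : injective B.
  move=> u v e; apply/eqP; rewrite -subr_eq0; apply/eqP.
  have := Bco (u - v); rewrite (BB BL) e subrr (inner0l HI).
  move=> h; apply/normr0_eq0; apply/eqP; rewrite -sqrf_eq0 eq_le sqr_ge0 andbT.
  by rewrite -(pmulr_rle0 _ mu0).
have [h hh] := choice surj.
exists h => v; last exact: hh.
by apply: inj; rewrite hh.
Qed.
End Bij.

Local Open Scope classical_set_scope.
Local Open Scope ring_scope.
Section Anal.
Variables (R : realType) (X : normedModType R) (inner : X -> X -> R) (J : X -> R) (g : X -> X).
Hypothesis HJ : is_C1_with_gradient inner J g.

Lemma hderiv (x d : X) (t : R) : is_derive t (1 : R) (fun a : R => J (x + a *: d)) (inner (g (x + t *: d)) d).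
Proof.
have [HJd _] := HJ; have [dJ dJg] := HJd (x + t *: d).
have E : (fun e : R => e^-1 *: (((fun a : R => J (x + a *: d)) \o shift t) (e *: 1) - J (x + t *: d)))
   = (fun e : R => e^-1 *: ((J \o shift (x + t *: d)) (e *: d) - J (x + t *: d))).
  apply/funext => e /=; congr (_ *: (J _ - _)).
  by rewrite [e *: 1]mulr1 scalerDl addrCA addrC.
have D : derivable J (x + t *: d) d := diff_derivable (v := d) dJ.
split.
- by rewrite /derivable E.
- by rewrite /derive E -/(derive J (x + t *: d) d) deriveE // dJg.
Qed.


Lemma small_step (x d : X) (sg : R) : sg < 1 -> inner (g x) d < 0 ->
  exists2 del : R, 0 < del & forall a, 0 < a -> a < del ->
    J (x + a *: d) < J x + a * sg * inner (g x) d.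
Proof.
move=> sg1 m0.
have H := hderiv x d 0.
have Hc := @ex_derive _ _ _ _ _ _ _ H.
rewrite /derivable in Hc.
have := derive_val (is_derive := H).
rewrite /derive => E; rewrite E scale0r addr0 in Hc.
have /(cvgr_lt _ Hc) : inner (g x) d < sg * inner (g x) d.
  nra.
case => del /= del0 Hdel.
exists del => // a a0 ad.
have : ball_ Num.Def.normr 0 del a by rewrite /ball_ /= sub0r normrN gtr0_norm.
move=> /Hdel /(_ (lt0r_neq0 a0)).
rewrite [a%:A]mulr1 addr0 -[_ *: _]/(_ * _) ltr_pdivrMl // => h.
by rewrite -ltrBlDl -mulrA.
Qed.


Lemma wolfe_exists (x d : X) (sg et lb : R) : (forall v, lb <= J v) ->
  0 < sg -> sg < et -> et < 1 -> inner (g x) d < 0 ->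
  exists a, [/\ 0 < a, J (x + a *: d) <= J x + a * sg * inner (g x) d
     & et * inner (g x) d <= inner (g (x + a *: d)) d].
Proof.
move=> hlb sg0 sget et1 m0.
have sg1 : sg < 1 by lra.
have [del del0 Hdel] := small_step sg1 m0.
set m := inner (g x) d in Hdel m0 *.
pose h := fun a : R => J (x + a *: d).
pose phi := h - cst (J x) - (sg * m) \*: (@id R).
have ephi a : phi a = J (x + a *: d) - J x - a * (sg * m).
  by rewrite [a * _]mulrC.
have Dphi t : is_derive t (1 : R) phi (inner (g (x + t *: d)) d - 0 - (sg * m) *: (1 : R)).
  apply: is_deriveB; first apply: is_deriveB.
  all: try exact: hderiv.
set a0 := del / 2.
have a00 : 0 < a0 by rewrite /a0 divr_gt0.
have phia0 : phi a0 < 0.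
  have a0d : a0 < del by rewrite /a0; lra.
  rewrite ephi mulrA; have := Hdel a0 a00 a0d; lra.
set q := - (sg * m).
have q0 : 0 < q by rewrite /q; nra.
have lbx := hlb x.
set A := a0 + (J x - lb) / q + 1.
have Jq : 0 <= (J x - lb) / q by rewrite divr_ge0 ?subr_ge0 // ltW.
have eA : A * q = a0 * q + (J x - lb) + q.
  by rewrite /A; field; rewrite gt_eqF.
have a0q : 0 < a0 * q by rewrite mulr_gt0.
have phiA : 0 < phi A.
  rewrite ephi; have := hlb (x + A *: d).
  have -> : A * (sg * m) = - (A * q) by rewrite /q mulrN opprK.
  rewrite eA; lra.
have A0 : 0 <= A by rewrite /A; lra.
have cont : {within `[0, A], continuous phi}.
  apply: derivable_within_continuous => t _; exact: (@ex_derive _ _ _ _ _ _ _ (Dphi t)).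
have [c cA cmin] := EVT_min A0 cont.
have phic : phi c < 0.
  apply: le_lt_trans phia0; apply: cmin; rewrite in_itv /= (ltW a00) /A; lra.
have phi0 : phi 0 = 0 by rewrite ephi scale0r addr0 mul0r !subrr.
move: cA; rewrite in_itv /= => /andP[c0 cA].
have c0' : 0 < c.
  rewrite lt_neqAle c0 andbT; apply/eqP => c0e; move: phic; rewrite -c0e phi0; lra.
have cA' : c < A.
  rewrite lt_neqAle cA andbT; apply/eqP => cAe; move: phic; rewrite cAe; lra.
have cin : c \in `]0, A[ by rewrite in_itv /= c0' cA'.
have := derive1_at_min A0 (fun t _ => @ex_derive _ _ _ _ _ _ _ (Dphi t)) cin.
move=> /(_ (fun t tin => cmin t (subset_itv_oo_cc tin))) H0.
have := derive_val (is_derive := H0); rewrite (derive_val (is_derive := Dphi c)).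
rewrite subr0 [_ *: 1]mulr1 => /eqP; rewrite subr_eq0 => /eqP hc.
exists c; split => //.
- by move: phic; rewrite ephi mulrA; lra.
- by rewrite hc; nra.
Qed.

End Anal.

Section Tau.
Variables (R : realType) (X : normedModType R) (inner : X -> X -> R).

Lemma proj_ge (l t : R) (u : \bar R) : (l%:E <= u)%E -> l <= fine (Order.min (Num.max t l)%:E u).
Proof.
case: u => [r||] //=; rewrite ?lee_fin => lr.
- by rewrite -EFin_min /= le_min le_max lexx orbT lr.
- by rewrite miney /= le_max lexx orbT.
Qed.

Lemma proj_mono (l t1 t2 : R) (u : \bar R) : t1 <= t2 ->
  fine (Order.min (Num.max t1 l)%:E u) <= fine (Order.min (Num.max t2 l)%:E u).
Proof.
move=> h.
have AB : Num.max t1 l <= Num.max t2 l by rewrite ge_max !le_max h lexx orbT.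
case: u => [r||] /=.
- by rewrite -!EFin_min /= le_min !ge_min AB lexx !orbT.
- by rewrite !miney.
- by [].
Qed.

End Tau.

Section Tau2.
Variables (R : realType) (X : normedModType R) (inner : X -> X -> R).
Hypothesis HI : is_inner_product inner.

Lemma tau_adm_ge c0 C0 c1 c2 (s y : X) Sn gn t :
  tau_admissible inner c0 C0 c1 c2 s y Sn gn t ->
  ((omega_l c0 c1 c2 gn)%:E <= omega_u C0 c1 c2 gn)%E -> omega_l c0 c1 c2 gn <= t.
Proof.
rewrite /tau_admissible /proj_tau /= => + hu; case: ifP => _ /andP[h _];
  exact: le_trans (proj_ge _ hu) h.
Qed.

Lemma tau_exists c0 C0 c1 c2 (s y : X) Sn gn :
  exists t, tau_admissible inner c0 C0 c1 c2 s y Sn gn t.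
Proof.
set z := y - Sn s; set rho := inner z s.
exists (proj_tau c0 C0 c1 c2 gn (rho / `|s| ^+ 2)).
rewrite /tau_admissible /= -/z -/rho.
have [s0|sn0] := eqVneq s 0.
  have r0 : rho = 0 by rewrite /rho s0 (inner0r HI).
  by rewrite r0 ltxx lexx /= s0 normr0 !mul0r invr0 !mulr0 lexx.
have ns0 : 0 < `|s| by rewrite normr_gt0.
have ns2 : 0 < `|s| ^+ 2 by rewrite exprn_gt0.
case: ifP => hr; rewrite lexx /=; apply: proj_mono.
- rewrite ler_pdivrMr // mulrAC ler_pdivlMr //.
  by rewrite -expr2; apply: le_trans (CS_sq HI z s); rewrite le_eqVlt eqxx.
- rewrite ler_pdivrMr //.
  have -> : `|z| / `|s| * `|s| ^+ 2 = `|z| * `|s| by field; rewrite gt_eqF.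
  exact: le_trans (ler_norm _) (CS HI z s).
Qed.

End Tau2.

Section Misc.
Variables (R : realType) (X : normedModType R) (inner : X -> X -> R).
Hypothesis HI : is_inner_product inner.

Lemma spd_shift (t : R) (S : X -> X) : 0 < t -> sym_psd_bounded inner S ->
  spd_bounded inner (fun v => t *: v + S v).
Proof.
move=> t0 [SL [M HM] Ssym Spsd].
have co v : t * `|v| ^+ 2 <= inner (t *: v + S v) v.
  by rewrite (innerDl HI) (innerZl HI) (inner_self HI) lerDl.
split; last by exists t.
split.
- move=> a u v; rewrite SL !scalerDr scalerA mulrC -scalerA addrACA.
  by rewrite -scalerDr.
- exists (`|t| + `|M|) => v; apply: le_trans (ler_normD _ _) _.
  rewrite normrZ mulrDl lerD //; apply: le_trans (HM v) _.
  by apply: ler_wpM2r => //; exact: ler_norm.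
- move=> u v; rewrite (innerDl HI) (innerZl HI) (innerDr HI) (innerZr HI) Ssym.
  by rewrite (innerC HI) [inner v u](innerC HI).
- move=> v; apply: le_trans (co v); apply: mulr_ge0; [exact: ltW|exact: sqr_ge0].
Qed.

End Misc.

Lemma ls_ok_pos (R : realType) (X : normedModType R) (inner : X -> X -> R) J g ls (x d : X) a :
  ls_params_ok ls -> ls_ok inner J g ls x d a ->
  0 < a /\ exists sg, 0 < sg /\ armijo inner J g sg x d a.
Proof.
case: ls => [beta sigma|sigma eta] /= [h1 h2].
- case=> i [-> [ha _]]; split; first by apply: exprn_gt0; case/andP: h1.
  by exists sigma; split => //; case/andP: h2.
- case=> a0 [ha _]; split => //; by exists sigma.
Qed.

Lemma pow_small (R : realType) (beta del : R) : 0 < beta < 1 -> 0 < del ->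
  exists i : nat, beta ^+ i < del.
Proof.
case/andP=> b0 b1 d0.
have : `|beta| < 1 by rewrite gtr0_norm.
move=> /cvg_expr /(cvgr_lt _) /(_ del d0) [N _ HN].
by exists N; apply: HN => /=.
Qed.

Theorem lemma4p3 (R : realType) (X : completeNormedModType R)
  (inner : X -> X -> R) (J : X -> R) (g : X -> X)
  (x0 : X) (eps : R) (ell : nat) (c0 : R) (C0 : \bar R) (cs c1 c2 : R)
  (ls : line_search R) :
  is_inner_product inner ->
  is_C1_with_gradient inner J g ->
  (exists m : R, forall v, m <= J v) ->
  0 <= eps -> 0 <= c0 -> (c0%:E <= C0)%E -> 0 < cs -> 0 < c1 -> 0 < c2 ->
  ls_params_ok ls ->
  g x0 != 0 ->
  forall (x : nat -> X) (Sop : nat -> X -> X) (tau alpha : nat -> R)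
         (d : nat -> X),
  x 0%N = x0 ->
  (* standing assumption 3 *)
  (c0 = 0 -> forall N, run_prefix inner J g eps ell c0 C0 cs c1 c2 ls x Sop tau alpha d N ->
     spd_bounded inner (B0_ Sop tau N)) ->
  (* well-definedness *)
  (forall N, run_prefix inner J g eps ell c0 C0 cs c1 c2 ls x Sop tau alpha d N ->
     [/\ chain_ok inner (B0_ Sop tau N) (stored_pairs inner g ell cs x N),
         spd_bounded inner (B_ inner g ell cs x Sop tau N),
         bijective (B_ inner g ell cs x Sop tau N)
       & forall dN, B_ inner g ell cs x Sop tau N dN = - g (x N) ->
           (exists a, ls_ok inner J g ls (x N) dN a) /\
           forall a, ls_ok inner J g ls (x N) dN a ->
             a *: dN != 0 /\
             forall Snext, sym_psd_bounded inner Snext ->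
               eps < `|g (x N + a *: dN)| ->
               exists t, tau_admissible inner c0 C0 c1 c2 (a *: dN)
                           (g (x N + a *: dN) - g (x N)) Snext
                           (g (x N + a *: dN)) t]) /\
  (* strict monotone decrease along every executed iteration *)
  (forall k, run_prefix inner J g eps ell c0 C0 cs c1 c2 ls x Sop tau alpha d k ->
     iter_ok inner J g ell cs ls x Sop tau alpha d k -> J (x k.+1) < J (x k)) /\
  (* convergence of (J(x_k)) if the algorithm does not stop *)
  ((forall k, run_prefix inner J g eps ell c0 C0 cs c1 c2 ls x Sop tau alpha d k) ->
     cvgn (fun k => J (x k))).
Proof.
move=> HI HJ [lb hlb] eps0 c00 c0C0 cs0 c10 c20 lsok gx0 x S tau alpha d x00 A3.
set RP := run_prefix inner J g eps ell c0 C0 cs c1 c2 ls x S tau alpha d.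
have gnz N : RP N -> g (x N) != 0.
  case: N => [|k] RPN; first by rewrite x00.
  have [_ _ Hk] := RPN; have [_ hg _] := Hk k (ltnSn k).
  by rewrite -normr_gt0; apply: le_lt_trans hg.
have B0spd N : RP N -> spd_bounded inner (B0_ S tau N).
  move=> RPN; have [tau00 HS Hk] := RPN.
  have [c0z|c0p] : c0 = 0 \/ 0 < c0 by move: c00; rewrite le_eqVlt => /orP[/eqP <-|]; [left|right].
    exact: A3 c0z N RPN.
  have tauN : 0 < tau N.
    case: N RPN HS Hk => [|k] RPN HS Hk; first by [].
    have [_ hg hta] := Hk k (ltnSn k).
    apply: lt_le_trans (tau_adm_ge hta _).
      rewrite /omega_l lt_min c0p /=; apply: mulr_gt0 => //; apply: powR_gt0.
      by apply: le_lt_trans hg.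
    rewrite /omega_u; apply: le_trans (le_trans _ c0C0) _.
      by rewrite lee_fin /omega_l ge_min lexx.
    by rewrite le_max lexx.
  rewrite /B0_; exact: (spd_shift HI tauN (HS N (leqnn N))).
have core N : RP N -> chain_ok inner (B0_ S tau N) (stored_pairs inner g ell cs x N) /\
    spd_bounded inner (B_ inner g ell cs x S tau N).
  move=> RPN.
  have hall : all (fun p => 0 < inner p.2 p.1) (stored_pairs inner g ell cs x N).
    rewrite /stored_pairs all_map; apply/allP => j; rewrite mem_filter => /andP[hj _] /=.
    apply: le_lt_trans hj; apply: mulr_ge0; [exact: ltW|exact: sqr_ge0].
  exact: (chain_spd HI (B0spd N RPN) hall).
have desc N dN : RP N -> B_ inner g ell cs x S tau N dN = - g (x N) ->
    dN != 0 /\ inner (g (x N)) dN < 0.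
  move=> RPN hd; have [_ hB] := core N RPN.
  have dN0 : dN != 0.
    have [[BL _ _ _] _] := hB.
    apply/eqP => d0; move: hd; rewrite d0 (B0 BL) => /eqP.
    by rewrite eq_sym oppr_eq0 (negbTE (gnz N RPN)).
  split => //.
  rewrite -[g (x N)]opprK -hd (innerNl HI) oppr_lt0.
  exact: (spd_pos hB dN0).
split.
  move=> N RPN; have [hc hB] := core N RPN.
  split => //; first (have := spd_bij HI hB; exact).
  move=> dN hd; have [dN0 m0] := desc N dN RPN hd.
  split.
  - have lsok2 := lsok; move: lsok2; case Els : ls => [beta sigma|sigma eta] /= [h1 h2].
    + have s1 : sigma < 1 by case/andP: h2.
      have [del del0 Hdel] := small_step HJ s1 m0.
      have [i hi] := pow_small h1 del0.
      have b0 : 0 < beta by case/andP: h1.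
      pose P := fun i => J (x N + beta ^+ i *: dN) <= J (x N) + beta ^+ i * sigma * inner (g (x N)) dN.
      have exP : exists i, P i by exists i; apply: ltW; apply: Hdel => //; exact: exprn_gt0.
      case: (ex_minnP exP) => i0 Pi0 mini0.
      exists (beta ^+ i0); exists i0; split => //; split => // j ji0 Pj.
      by have := mini0 j Pj; rewrite leqNgt ji0.
    + have [a [a0 ha1 ha2]] := wolfe_exists HJ hlb h1 (proj1 h2) (proj2 h2) m0.
      by exists a.
  - move=> a hls; have [a0 _] := ls_ok_pos lsok hls.
    split; first by rewrite scaler_eq0 negb_or dN0 andbT gt_eqF.
    move=> Sn _ _; exact: tau_exists.
have decr k : RP k -> iter_ok inner J g ell cs ls x S tau alpha d k -> J (x k.+1) < J (x k).
  move=> RPk [hd hls hx].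
  have [_ m0] := desc k (d k) RPk hd.
  have [a0 [sg [sg0 harm]]] := ls_ok_pos lsok hls.
  rewrite hx; apply: (le_lt_trans harm).
  rewrite gtrDl; have := mulr_gt0 a0 sg0; nra.
split => // allRP.
apply: nonincreasing_is_cvgn.
  apply/nonincreasing_seqP => n; apply: ltW; apply: decr => //.
  by have [_ _ Hk] := allRP n.+1; have [] := Hk n (ltnSn n).
by exists lb => _ [n _ <-]; exact: hlb.
Qed.
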